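(* For the revision operator $\mathsf{OGI}$: (a) postulate $(P^*1)$ fails in general: there exist $W$, a distance $d$, an observation function $O$, a belief state $b$ and a satisfiable $\alpha$ (which is weakly observable) such that $b\,\mathsf{OGI}\,\alpha$ is not a belief state; (b) if $\alpha$ is strongly observable, then for every belief state $b$, $b\,\mathsf{OGI}\,\alpha$ is a belief state if and only if $\alpha$ is satisfiable.
   Context: $W$ is the finite set of worlds of a finite propositional language $L$; $\|\alpha\|$ the set of $\alpha$-worlds. A belief state is a probability distribution $b$ on $W$. $d$ is a distance on worlds satisfying $d(w,w)<d(v,w)$ for all $v\neq w$. $\mathit{Min}(\alpha,w,d):=\{w'\in\|\alpha\|:\forall w''\in\|\alpha\|,\ d(w',w)\le d(w'',w)\}$. Generalized imaging: $(b\,\mathsf{GI}\,\alpha)(w)=0$ if $w\notin\|\alpha\|$, else $(b\,\mathsf{GI}\,\alpha)(w)=\sum_{w'\in W:\,w\in\mathit{Min}(\alpha,w',d)}b(w')/|\mathit{Min}(\alpha,w',d)|$. With an observation function $O:L\times W\to[0,1]$, $(b\,\mathsf{OGI}\,\alpha)(w)=\frac{O(\alpha,w)(b\,\mathsf{GI}\,\alpha)(w)}{\sum_{w'}O(\alpha,w')(b\,\mathsf{GI}\,\alpha)(w')}$, which is a belief state iff the denominator is positive and undefined otherwise. $\alpha$ is weakly observable iff some $w\models\alpha$ has $O(\alpha,w)>0$; strongly observable iff $O(\alpha,w)>0$ for all $w\models\alpha$. *)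

(* Defs.v *)
From HB Require Import structures.
From mathcomp Require Import all_boot all_order all_algebra.
Set Implicit Arguments. Unset Strict Implicit. Unset Printing Implicit Defensive.
Import Order.TTheory GRing.Theory Num.Theory.
Local Open Scope ring_scope.

Inductive pform (n : nat) : Type :=
  | FAtom of 'I_n
  | FTop
  | FNeg of pform n
  | FAnd of pform n & pform n
  | FOr of pform n & pform n.

Definition world (n : nat) : finType := {ffun 'I_n -> bool}.

Fixpoint sat (n : nat) (w : world n) (f : pform n) : bool :=
  match f with
  | FAtom i => w i
  | FTop => true
  | FNeg g => ~~ sat w g
  | FAnd g h => sat w g && sat w h
  | FOr g h => sat w g || sat w h
  end.

Definition models (n : nat) (a : pform n) : {set world n} := [set w | sat w a].

Definition satisfiable (n : nat) (a : pform n) : Prop := exists w : world n, sat w a.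

Section Imaging.
Variables (R : realFieldType) (n : nat).
Notation W := (world n).

Definition faithful_dist (d : W -> W -> R) : Prop :=
  forall v w : W, v != w -> d w w < d v w.

Definition metric (d : W -> W -> R) : Prop :=
  [/\ forall v w, 0 <= d v w,
      forall v w, d v w = 0 <-> v = w,
      forall v w, d v w = d w v &
      forall u v w, d u w <= d u v + d v w].

Definition belief_state (b : W -> R) : Prop :=
  (forall w, 0 <= b w) /\ \sum_(w : W) b w = 1.

Definition obs_fun (O : pform n -> W -> R) : Prop :=
  forall a w, 0 <= O a w <= 1.

Definition weakly_observable (O : pform n -> W -> R) (a : pform n) : Prop :=
  exists2 w : W, sat w a & 0 < O a w.

Definition strongly_observable (O : pform n -> W -> R) (a : pform n) : Prop :=
  forall w : W, sat w a -> 0 < O a w.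

Definition Min (a : pform n) (w : W) (d : W -> W -> R) : {set W} :=
  [set w' | (w' \in models a) && [forall w'', (w'' \in models a) ==> (d w' w <= d w'' w)]].

Definition GI (d : W -> W -> R) (b : W -> R) (a : pform n) (w : W) : R :=
  if w \in models a then
    \sum_(w' : W | w \in Min a w' d) b w' / (#|Min a w' d|)%:R
  else 0.

(* observation-based generalized imaging; None = undefined *)
Definition OGI (d : W -> W -> R) (O : pform n -> W -> R) (b : W -> R) (a : pform n)
  : option (W -> R) :=
  let den := \sum_(w' : W) O a w' * GI d b a w' in
  if 0 < den then Some (fun w => O a w * GI d b a w / den) else None.

Definition OGI_belief (d : W -> W -> R) (O : pform n -> W -> R) (b : W -> R) (a : pform n)
  : Prop :=
  exists2 b' : W -> R, OGI d O b a = Some b' & belief_state b'.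

End Imaging.

(* Main.v *)
Require Import Defs.
From HB Require Import structures.
From mathcomp Require Import all_boot all_order all_algebra.
Import Order.TTheory GRing.Theory Num.Theory.
Local Open Scope ring_scope.

Lemma GI_ge0 (R : realFieldType) n (d : world n -> world n -> R) (b : world n -> R) a w :
  (forall w, 0 <= b w) -> 0 <= GI d b a w.
Proof.
move=> hb; rewrite /GI; case: ifP => _ //.
by apply: sumr_ge0 => w' _; apply: divr_ge0.
Qed.

Lemma sum_pos (R : realFieldType) (T : finType) (f : T -> R) x :
  (forall y, 0 <= f y) -> 0 < f x -> 0 < \sum_y f y.
Proof.
move=> h hx; rewrite (bigD1 x) //=.
by apply: (lt_le_trans hx); rewrite lerDl; apply: sumr_ge0.
Qed.

Theorem proposition8 (R : realFieldType) :
  (* (a) (P*1) fails in general *)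
  (exists (n : nat) (d : world n -> world n -> R) (O : pform n -> world n -> R)
          (b : world n -> R) (a : pform n),
      faithful_dist d /\ metric d /\ obs_fun O /\ belief_state b /\
      satisfiable a /\ weakly_observable O a /\ ~ OGI_belief d O b a)
  /\
  (* (b) strongly observable: OGI yields a belief state iff alpha satisfiable *)
  (forall (n : nat) (d : world n -> world n -> R) (O : pform n -> world n -> R)
          (a : pform n),
      faithful_dist d -> obs_fun O -> strongly_observable O a ->
      forall b : world n -> R, belief_state b ->
        (OGI_belief d O b a <-> satisfiable a)).
Proof.
split.
  pose w0 : world 1 := [ffun _ => false].
  pose w1 : world 1 := [ffun _ => true].
  have w10 : w1 != w0 by apply/eqP => /(congr1 (fun f : world 1 => f ord0)); rewrite !ffunE.
  pose d := fun v w : world 1 => if v == w then 0 else 1 : R.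
  pose O := fun (_ : pform 1) (w : world 1) => if w == w0 then 0 else 1 : R.
  pose b := fun w : world 1 => if w == w0 then 1 else 0 : R.
  exists 1%N, d, O, b, (FTop 1).
  split; first by move=> v w vw; rewrite /d eqxx (negbTE vw).
  split.
    split.
    - by move=> v w; rewrite /d; case: ifP.
    - move=> v w; rewrite /d; case: eqVneq => [->|vw]; split => //.
      + by move/eqP; rewrite oner_eq0.
      + by move=> e; move: vw; rewrite e eqxx.
    - by move=> v w; rewrite /d eq_sym.
    - move=> u v w; rewrite /d; case: (eqVneq u w) => [->|uw].
        by apply: addr_ge0; case: ifP.
      case: (eqVneq u v) => [<-|_]; first by rewrite (negbTE uw) add0r.
      by case: ifP => _; rewrite ?addr0 ?lerDl.
  split; first by move=> c w; rewrite /O; case: ifP => _; rewrite ?lexx ?ler01.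
  split.
    split; first by move=> w; rewrite /b; case: ifP.
    rewrite (bigD1 w0) //= /b eqxx big1 ?addr0 // => w /negbTE -> //.
  split; first by exists w1.
  split; first by exists w1 => //; rewrite /O (negbTE w10).
  case=> b' + _; rewrite /OGI.
  suff -> : \sum_w' O (FTop 1) w' * GI d b (FTop 1) w' = 0 by rewrite ltxx.
  apply: big1 => w _; rewrite /O; case: eqVneq => [_|ww0]; first by rewrite mul0r.
  rewrite mul1r /GI; case: ifP => _ //.
  apply: big1 => w' hin; rewrite /b; case: eqVneq => [e|_]; last by rewrite mul0r.
  subst w'; move: hin; rewrite inE => /andP [_ /forallP /(_ w0)].
  rewrite /models inE /= /d eqxx (negbTE ww0).
  by rewrite ler10.
move=> n d O a _ hO hs b [hb0 hb1].
have hO0 : forall c w, 0 <= O c w by move=> c w; case/andP: (hO c w).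
split.
  case=> b' + _; rewrite /OGI; case: ifP => // hpos _.
  case: (pickP (fun w => sat w a)) => [w hw|h]; first by exists w.
  move: hpos; rewrite big1 ?ltxx // => w _.
  by rewrite /GI /models inE h mulr0.
case=> w hw.
have [w' hw'] : exists w', 0 < b w'.
  case: (pickP (fun w => 0 < b w)) => [w' h|h]; first by exists w'.
  move: hb1; rewrite big1 => [/eqP|y _]; first by rewrite eq_sym oner_eq0.
  by apply/eqP; rewrite eq_le hb0 andbT leNgt h.
have wa : w \in models a by rewrite inE.
set m := Order.arg_min w [pred x | x \in models a] (fun x => d x w').
have mMin : m \in Min a w' d.
  rewrite /m; case: arg_minP => // x xa hx.
  by rewrite inE (xa : x \in models a) /=; apply/forallP => y; apply/implyP => /hx.
have GIm : 0 < GI d b a m.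
  have ma : m \in models a by move: mMin; rewrite inE => /andP [].
  rewrite /GI ma (bigD1 w') //=.
  apply: (lt_le_trans (y := b w' / (#|Min a w' d|)%:R)).
    apply: divr_gt0 => //; rewrite ltr0n; apply/card_gt0P; by exists m.
  rewrite lerDl; apply: sumr_ge0 => y _; apply: divr_ge0 => //.
have Om : 0 < O a m.
  by apply: hs; move: mMin; rewrite inE /models inE => /andP [].
have hpos : 0 < \sum_w' O a w' * GI d b a w'.
  apply: (@sum_pos _ _ _ m); last exact: mulr_gt0.
  by move=> y; apply: mulr_ge0 => //; apply: GI_ge0.
eexists; first by rewrite /OGI hpos.
split.
  move=> y; apply: divr_ge0; last exact: ltW.
  by apply: mulr_ge0 => //; apply: GI_ge0.
by rewrite -mulr_suml divff // gt_eqF.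
Qed.
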